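(* The set $\mathcal C=(0,\infty)\times\mathbb R$ is an invariant control set for the system (N).
   Context: Fix $\delta\in\mathbb R$, $\gamma>0$, $D>0$. System (N): $d\xi=-\xi^4\eta\,dt$, $d\eta=(\delta\xi+2\xi^3\eta^2-\gamma\xi^4\eta)dt+\sqrt{2D}\,dW$. Associated control problem: $\dot z_1=-z_1^4z_2$, $\dot z_2=\delta z_1+2z_1^3z_2^2-\gamma z_1^4z_2+\sqrt{2D}\,u(t)$ with smooth admissible controls $u:[0,\infty)\to\mathbb R$. For $(\xi,\eta)\in\mathbb R^2$ and $T>0$, $\mathcal O(T,\xi,\eta)$ is the set of points $(z_1(T),z_2(T))$ reachable at time $T$ by a solution of the control problem starting from $(\xi,\eta)$, and $\mathcal O(\xi,\eta)=\bigcup_{T>0}\mathcal O(T,\xi,\eta)$. A nonempty set $\mathcal C\subset\mathbb R^2$ is an invariant control set for (N) if $\overline{\mathcal C}=\overline{\mathcal O(\xi,\eta)}$ for all $(\xi,\eta)\in\mathcal C$ and $\mathcal C$ is maximal with respect to inclusion among sets with this property. *)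

(* Defs.v *)
From Stdlib Require Import Reals.
Open Scope R_scope.

Definition set2 := R -> R -> Prop.

Definition smooth (u : R -> R) : Prop :=
  exists f : nat -> R -> R,
    f O = u /\ forall (n : nat) (x : R), derivable_pt_lim (f n) x (f (S n) x).

Definition ctrl_solution (delta gamma D : R) (u : R -> R) (T : R)
    (z1 z2 : R -> R) : Prop :=
  forall t, 0 <= t <= T ->
    derivable_pt_lim z1 t (- (z1 t) ^ 4 * z2 t) /\
    derivable_pt_lim z2 t
      (delta * z1 t + 2 * (z1 t) ^ 3 * (z2 t) ^ 2
       - gamma * (z1 t) ^ 4 * z2 t + sqrt (2 * D) * u t).

Definition reach_T (delta gamma D T xi eta : R) : set2 :=
  fun p q => exists (u : R -> R) (z1 z2 : R -> R),
    smooth u /\ ctrl_solution delta gamma D u T z1 z2 /\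
    z1 0 = xi /\ z2 0 = eta /\ z1 T = p /\ z2 T = q.

Definition reach (delta gamma D xi eta : R) : set2 :=
  fun p q => exists T, 0 < T /\ reach_T delta gamma D T xi eta p q.

(* Closure in R^2 (Euclidean topology, expressed with the max-norm). *)
Definition closure2 (S : set2) : set2 :=
  fun p q => forall eps, 0 < eps ->
    exists a b, S a b /\ Rabs (p - a) < eps /\ Rabs (q - b) < eps.

Definition set2_eq (A B : set2) : Prop := forall p q, A p q <-> B p q.
Definition set2_sub (A B : set2) : Prop := forall p q, A p q -> B p q.

Definition ctrl_prop (delta gamma D : R) (C : set2) : Prop :=
  forall xi eta, C xi eta ->
    set2_eq (closure2 C) (closure2 (reach delta gamma D xi eta)).

Definition invariant_control_set (delta gamma D : R) (C : set2) : Prop :=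
  (exists xi eta, C xi eta) /\
  ctrl_prop delta gamma D C /\
  (forall C' : set2, (exists xi eta, C' xi eta) -> ctrl_prop delta gamma D C' ->
     set2_sub C C' -> set2_sub C' C).

(* Main.v *)
Require Import Defs.
From Stdlib Require Import Reals Lra Psatz Ranalysis5.
Open Scope R_scope.

Inductive ex := Cst (r : R) | Vr | Ad (a b : ex) | Ml (a b : ex) | Ep (a : ex).
Fixpoint ev (e : ex) (x : R) : R :=
  match e with Cst r => r | Vr => x | Ad a b => ev a x + ev b x
  | Ml a b => ev a x * ev b x | Ep a => exp (ev a x) end.
Fixpoint dv (e : ex) : ex :=
  match e with Cst _ => Cst 0 | Vr => Cst 1 | Ad a b => Ad (dv a) (dv b)
  | Ml a b => Ad (Ml (dv a) b) (Ml a (dv b)) | Ep a => Ml (dv a) (Ep a) end.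

Lemma dv_ok e x : derivable_pt_lim (ev e) x (ev (dv e) x).
Proof.
  induction e; simpl.
  - exact (derivable_pt_lim_const r x).
  - exact (derivable_pt_lim_id x).
  - exact (derivable_pt_lim_plus _ _ _ _ _ IHe1 IHe2).
  - exact (derivable_pt_lim_mult _ _ _ _ _ IHe1 IHe2).
  - rewrite Rmult_comm. exact (derivable_pt_lim_comp _ exp _ _ _ IHe (derivable_pt_lim_exp _)).
Qed.

Lemma ev_smooth e : smooth (ev e).
Proof.
  exists (fun n => ev (Nat.iter n dv e)). split; [reflexivity|].
  intros n x. simpl. apply dv_ok.
Qed.

Section C.
Variables (delta gamma D : R) (b : ex).
Definition z1e := Ep (Ml (Cst (-1)) b).
Definition z2e := Ml (dv b) (Ml (Ep b) (Ml (Ep b) (Ep b))).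
Definition We := Ad (Ml (Cst delta) z1e)
  (Ad (Ml (Cst 2) (Ml (Ml z1e (Ml z1e z1e)) (Ml z2e z2e)))
      (Ml (Cst (-gamma)) (Ml (Ml z1e (Ml z1e (Ml z1e z1e))) z2e))).
Definition ue := Ml (Cst (/ sqrt (2 * D))) (Ad (dv z2e) (Ml (Cst (-1)) We)).
End C.

Lemma expm1 B : exp (-1 * B) * exp B = 1.
Proof. rewrite <- exp_plus. replace (-1*B+B) with 0 by ring. apply exp_0. Qed.

Lemma ctrl_ok delta gamma D b T : 0 < D ->
  ctrl_solution delta gamma D (ev (ue delta gamma D b)) T (ev (z1e b)) (ev (z2e b)).
Proof.
  intros hD t _. split.
  - replace (- ev (z1e b) t ^ 4 * ev (z2e b) t) with (ev (dv (z1e b)) t).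
    + apply dv_ok.
    + simpl. pose proof (expm1 (ev b t)).
      set (F := exp (-1 * ev b t)) in *. set (E := exp (ev b t)) in *.
      replace (- (F * (F * (F * (F * 1)))) * (ev (dv b) t * (E * (E * E)))) with
        (- F * ev (dv b) t * ((F * E) * (F*E) * (F*E))) by ring.
      rewrite H. ring.
  - match goal with |- derivable_pt_lim _ _ ?l => replace l with (ev (dv (z2e b)) t) end.
    + apply dv_ok.
    + assert (hs : sqrt (2*D) <> 0) by (apply Rgt_not_eq, sqrt_lt_R0; lra).
      unfold ue. cbn [ev]. unfold We. cbn [ev]. field. exact hs.
Qed.

Lemma reach_pos delta gamma D xi eta p q : 0 < D -> 0 < xi -> 0 < p ->
  reach delta gamma D xi eta p q.
Proof.
  intros hD hxi hp.
  set (B0 := - ln xi). set (D0 := eta * xi^3). set (B1 := - ln p). set (D1 := q * p^3).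
  set (c2 := 3*(B1-B0) - 2*D0 - D1). set (c3 := 2*(B0-B1) + D0 + D1).
  set (b := Ad (Cst B0) (Ml Vr (Ad (Cst D0) (Ml Vr (Ad (Cst c2) (Ml Vr (Cst c3))))))).
  exists 1. split; [lra|].
  exists (ev (ue delta gamma D b)), (ev (z1e b)), (ev (z2e b)).
  split; [apply ev_smooth|]. split; [apply ctrl_ok; lra|].
  assert (hb0 : ev b 0 = B0) by (simpl; ring).
  assert (hd0 : ev (dv b) 0 = D0) by (simpl; ring).
  assert (hb1 : ev b 1 = B1) by (simpl; unfold c2, c3; ring).
  assert (hd1 : ev (dv b) 1 = D1) by (simpl; unfold c2, c3; ring).
  assert (e1 : forall y, 0 < y -> exp (- ln y) = / y).
  { intros y hy. rewrite exp_Ropp, exp_ln; auto. }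
  assert (e2 : forall y, 0 < y -> exp (-1 * - ln y) = y).
  { intros y hy. replace (-1 * - ln y) with (ln y) by ring. apply exp_ln; auto. }
  unfold z1e, z2e. cbn [ev].
  rewrite hb0, hd0, hb1, hd1. unfold B0, B1, D0, D1.
  rewrite e1, e1, e2, e2 by auto.
  repeat split; field; lra.
Qed.

Section S.
Variables (delta gamma D : R) (u : R -> R) (T : R) (z1 z2 : R -> R).
Hypothesis hT : 0 < T.
Hypothesis hs : ctrl_solution delta gamma D u T z1 z2.

Lemma cont1 t : 0 <= t <= T -> continuity_pt z1 t.
Proof. intros h. apply derivable_continuous_pt. exists (- (z1 t) ^ 4 * z2 t). apply (hs t h). Qed.
Lemma cont2 t : 0 <= t <= T -> continuity_pt z2 t.
Proof. intros h. apply derivable_continuous_pt. eexists. apply (hs t h). Qed.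

Lemma bnd : exists K, 0 <= K /\ forall t, 0 <= t <= T -> Rabs (z1 t ^ 3 * z2 t) <= K.
Proof.
  destruct (continuity_ab_maj (fun t => Rabs (z1 t ^ 3 * z2 t)) 0 T) as [M [HM _]].
  - lra.
  - intros c hc.
    apply (continuity_pt_comp (fun t => z1 t ^ 3 * z2 t) Rabs).
    + apply (continuity_pt_mult (fun t => z1 t ^ 3) z2); [|apply cont2; auto].
      change (fun t => z1 t ^3) with (comp (fun x => x ^ 3) z1).
      apply continuity_pt_comp; [apply cont1; auto|].
      apply derivable_continuous_pt. apply derivable_pt_pow.
    + apply Rcontinuity_abs.
  - exists (Rabs (z1 M ^ 3 * z2 M)). split; [apply Rabs_pos|]. exact HM.
Qed.

Lemma hder (s t : R) : 0 <= t <= T ->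
  derivable_pt_lim (fun t => z1 t * z1 t * exp (s * t)) t
    (z1 t * z1 t * exp (s * t) * (2 * (- (z1 t ^ 3 * z2 t)) + s)).
Proof.
  intros h. destruct (hs t h) as [d1 _].
  assert (de : derivable_pt_lim (fun t => exp (s * t)) t (exp (s*t) * (s * 1))).
  { apply (derivable_pt_lim_comp (mult_real_fct s id) exp).
    - apply derivable_pt_lim_scal, derivable_pt_lim_id.
    - apply derivable_pt_lim_exp. }
  pose proof (derivable_pt_lim_mult _ _ _ _ _ (derivable_pt_lim_mult _ _ _ _ _ d1 d1) de) as H.
  match goal with |- derivable_pt_lim _ _ ?l => replace l with
    ((- z1 t ^ 4 * z2 t * z1 t + z1 t * (- z1 t ^ 4 * z2 t)) * exp (s*t) + z1 t * z1 t * (exp (s * t) * (s * 1))) by ring end.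
  exact H.
Qed.

Lemma zero_inv : z1 0 = 0 -> z1 T = 0.
Proof.
  intros h0. destruct bnd as [K [HK Hb]].
  destruct (MVT_cor2 (fun t => z1 t * z1 t * exp (- (2*K) * t))
     (fun t => z1 t * z1 t * exp (- (2*K) * t) * (2 * (- (z1 t ^ 3 * z2 t)) + - (2*K))) 0 T hT)
    as [c [Hc Hc2]].
  { intros c hc. apply hder; auto. }
  rewrite h0 in Hc.
  assert (Hbc := Hb c ltac:(lra)). pose proof (Rle_abs (- (z1 c ^ 3 * z2 c))).
  rewrite Rabs_Ropp in H.
  assert (0 <= z1 c * z1 c * exp (- (2 * K) * c)).
  { apply Rmult_le_pos; [nra| left; apply exp_pos]. }
  assert (hq : z1 c * z1 c * exp (- (2 * K) * c) * (2 * - (z1 c ^ 3 * z2 c) + - (2 * K)) <= 0).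
  { rewrite <- (Rmult_0_r (z1 c * z1 c * exp (- (2 * K) * c))). apply Rmult_le_compat_l; [auto| lra]. }
  cbv beta in Hc.
  assert (z1 T * z1 T * exp (- (2 * K) * T) <= 0).
  { assert (hm : 0 <= T - 0) by lra. pose proof (Rmult_le_compat_r _ _ _ hm hq). lra. }
  pose proof (exp_pos (- (2 * K) * T)).
  assert (z1 T * z1 T <= 0).
  { destruct (Rle_lt_dec (z1 T * z1 T) 0); auto. pose proof (Rmult_lt_0_compat _ _ r H2). lra. }
  nra.
Qed.

Lemma ne_zero t : 0 <= t <= T -> 0 < z1 0 -> z1 t <> 0.
Proof.
  intros ht h0 hz. destruct bnd as [K [HK Hb]].
  destruct (Req_dec t 0) as [->|ht0]; [lra|].
  destruct (MVT_cor2 (fun t => z1 t * z1 t * exp ((2*K) * t))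
     (fun t => z1 t * z1 t * exp ((2*K) * t) * (2 * (- (z1 t ^ 3 * z2 t)) + (2*K))) 0 t ltac:(lra))
    as [c [Hc Hc2]].
  { intros c hc. apply hder. lra. }
  rewrite hz in Hc.
  assert (Hbc := Hb c ltac:(lra)). pose proof (Rle_abs (z1 c ^ 3 * z2 c)).
  assert (0 <= z1 c * z1 c * exp ((2 * K) * c)).
  { apply Rmult_le_pos; [nra| left; apply exp_pos]. }
  assert (hq : 0 <= z1 c * z1 c * exp ((2 * K) * c) * (2 * - (z1 c ^ 3 * z2 c) + (2 * K))).
  { apply Rmult_le_pos; [auto| lra]. }
  cbv beta in Hc. assert (hm : 0 <= t - 0) by lra. pose proof (Rmult_le_compat_r _ _ _ hm hq).
  replace (z1 0 * z1 0 * exp (2 * K * 0)) with (z1 0 * z1 0) in Hc by (rewrite Rmult_0_r, exp_0; ring).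
  nra.
Qed.

Lemma pos_inv : 0 < z1 0 -> 0 < z1 T.
Proof.
  intros h0. destruct (Rlt_le_dec 0 (z1 T)) as [|hle]; auto.
  destruct hle as [hl|he].
  - destruct (IVT_interv (fun t => - z1 t) 0 T) as [z [hz1 hz2]].
    + intros a ha. apply continuity_pt_opp, cont1; auto.
    + exact hT.
    + lra.
    + lra.
    + exfalso. apply (ne_zero z hz1 h0). lra.
  - exfalso. apply (ne_zero T ltac:(lra) h0). auto.
Qed.
End S.
Lemma reach_nonneg delta gamma D xi eta a b : 0 < xi -> reach delta gamma D xi eta a b -> 0 < a.
Proof.
  intros hxi [T [hT [u [z1 [z2 [_ [hs [h1 [_ [h3 _]]]]]]]]]].
  subst. apply (pos_inv delta gamma D u T z1 z2 hT hs). lra.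
Qed.

Lemma reach_zero delta gamma D eta a b : reach delta gamma D 0 eta a b -> a = 0.
Proof.
  intros [T [hT [u [z1 [z2 [_ [hs [h1 [_ [h3 _]]]]]]]]]].
  subst. apply (zero_inv delta gamma D u T z1 z2 hT hs). auto.
Qed.

Lemma cl_nonneg (S : set2) p q : (forall a b, S a b -> 0 <= a) -> closure2 S p q -> 0 <= p.
Proof.
  intros hS hc. destruct (Rle_lt_dec 0 p) as [|hp]; auto.
  destruct (hc (-p) ltac:(lra)) as [a [b [hab [h1 _]]]].
  pose proof (hS a b hab). pose proof (Rle_abs (p - a)). rewrite Rabs_minus_sym in h1.
  pose proof (Rle_abs (a - p)). lra.
Qed.

Lemma cl_half p q (S : set2) : (forall a b, 0 < a -> S a b) -> 0 <= p -> closure2 S p q.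
Proof.
  intros hS hp eps he. exists (p + eps/2), q. split; [apply hS; lra|].
  replace (p - (p + eps/2)) with (- (eps/2)) by ring. rewrite Rabs_Ropp, Rminus_diag, Rabs_R0.
  rewrite Rabs_right by lra. lra.
Qed.

Lemma cl_self (S : set2) p q : S p q -> closure2 S p q.
Proof. intros h eps he. exists p, q. rewrite !Rminus_diag, Rabs_R0. repeat split; auto. Qed.

Theorem mainTheorem13 (delta gamma D : R) (hgamma : 0 < gamma) (hD : 0 < D) :
  invariant_control_set delta gamma D (fun xi eta => 0 < xi).
Proof.
  assert (hcp : ctrl_prop delta gamma D (fun xi eta => 0 < xi)).
  { intros xi eta hxi p q. split; intros h.
    - apply cl_half; [intros; apply reach_pos; auto|].
      apply (cl_nonneg (fun xi _ : R => 0 < xi) p q); auto. intros; lra.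
    - apply cl_half; auto. apply (cl_nonneg (reach delta gamma D xi eta) p q); auto.
      intros a b hr. left. exact (reach_nonneg _ _ _ _ _ _ _ hxi hr). }
  split; [exists 1, 0; lra|]. split; [exact hcp|].
  intros C' _ hC' hsub p q hp.
  assert (h10 : C' 1 0) by (apply hsub; lra).
  assert (p0 : 0 <= p).
  {     apply (cl_nonneg (reach delta gamma D 1 0) p q).
    - intros a b hr. left. exact (reach_nonneg delta gamma D 1 0 a b ltac:(lra) hr).
    - apply (proj1 (hC' 1 0 h10 p q)). apply cl_self; auto. }
  destruct p0 as [|e]; auto. subst p. exfalso.
  assert (hc := proj1 (hC' 0 q hp 1 0) (cl_self _ _ _ h10)).
  destruct (hc 1 ltac:(lra)) as [a [b [hr [h1 _]]]].
  rewrite (reach_zero _ _ _ _ _ _ hr) in h1. rewrite Rminus_0_r, Rabs_R1 in h1. lra.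
Qed.
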